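(* Let $A\in\mathbb{C}^{m\times n}$. Then there exists $X\in A\{1,4^{\mathfrak{m}}\}$ if and only if there exists $Y\in A\{1,2,4^{\mathfrak{m}}\}$.
   Context: For a positive integer $k$, the Minkowski metric matrix of order $k$ is $G_k=\mathrm{diag}(1,-I_{k-1})$ (with $G_1=(1)$). For $A\in\mathbb{C}^{m\times n}$, the Minkowski adjoint is $A^{\sim}=G_nA^*G_m$, where $A^*$ is the conjugate transpose. For $A\in\mathbb{C}^{m\times n}$ and $X\in\mathbb{C}^{n\times m}$ consider the equations $(1)\ AXA=A$, $(2)\ XAX=X$, $(3^{\mathfrak{m}})\ (AX)^{\sim}=AX$, $(4^{\mathfrak{m}})\ (XA)^{\sim}=XA$; $A\{i,\dots,k\}$ denotes the set of all $X$ satisfying the listed equations. *)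

(* Defs.v *)
(* Complex numbers C are modelled as R[i] = complex R for an
   arbitrary R : realType (mathcomp-real-closed's `complex`), so R[i] is C. *)
From HB Require Import structures.
From mathcomp Require Import all_boot all_algebra.
From mathcomp Require Import complex reals.
Set Implicit Arguments. Unset Strict Implicit. Unset Printing Implicit Defensive.
Import GRing.Theory.
Local Open Scope ring_scope.

Definition minkG {F : nzRingType} (k : nat) : 'M[F]_k :=
  \matrix_(i < k, j < k) (if i == j then (if val i == 0%N then 1 else -1) else 0).

Definition ctrmx {R : realType} {m n : nat} (A : 'M[R[i]]_(m, n)) : 'M[R[i]]_(n, m) :=
  (map_mx (fun z => (z^*)%C) A)^T.

Definition mink_adj {R : realType} {m n : nat} (A : 'M[R[i]]_(m, n)) : 'M[R[i]]_(n, m) :=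
  minkG n *m ctrmx A *m minkG m.

Definition eq1 {R : realType} {m n : nat} (A : 'M[R[i]]_(m, n)) (X : 'M[R[i]]_(n, m)) : Prop :=
  A *m X *m A = A.
Definition eq2 {R : realType} {m n : nat} (A : 'M[R[i]]_(m, n)) (X : 'M[R[i]]_(n, m)) : Prop :=
  X *m A *m X = X.
Definition eq4m {R : realType} {m n : nat} (A : 'M[R[i]]_(m, n)) (X : 'M[R[i]]_(n, m)) : Prop :=
  mink_adj (X *m A) = X *m A.

(* Main.v *)
Require Import Defs.
From HB Require Import structures.
From mathcomp Require Import all_boot all_algebra.
From mathcomp Require Import complex reals.
Local Open Scope ring_scope.

Theorem theorem4p5 (R : realType) (m n : nat) (A : 'M[R[i]]_(m, n)) :
  (exists X : 'M[R[i]]_(n, m), eq1 A X /\ eq4m A X) <->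
  (exists Y : 'M[R[i]]_(n, m), eq1 A Y /\ eq2 A Y /\ eq4m A Y).
Proof.
split; last first.
  by case=> Y [h1 [_ h4]]; exists Y.
case=> X [h1 h4]; exists (X *m A *m X).
have hYA : X *m A *m X *m A = X *m A.
  by rewrite -[in RHS]h1 !mulmxA.
rewrite /eq1 /eq2 /eq4m hYA; split; last split => //.
- by rewrite !mulmxA h1 h1.
- by rewrite !mulmxA hYA.
Qed.
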